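(* Let $d\ge 3$ and let $j$ be an integer with $d\le j\le \left\lfloor \frac{3(d-1)}{2}\right\rfloor$. (a) If $d$ is odd and $j-d$ is even, then $\operatorname{triv}(d,j)=\left\lfloor \frac{3d-2j-3}{6}\right\rfloor$ and $\operatorname{sign}(d,j)=\left\lfloor \frac{3d-2j-3}{6}\right\rfloor+1$. (b) If $d$ is odd and $j-d$ is odd, then $\operatorname{triv}(d,j)=\left\lfloor \frac{3d-2j-3}{6}\right\rfloor+1$ and $\operatorname{sign}(d,j)=\left\lfloor \frac{3d-2j-3}{6}\right\rfloor$. (c) If $d$ is even, then $\operatorname{triv}(d,j)=\operatorname{sign}(d,j)=\left\lfloor \frac{3d-2j}{6}\right\rfloor$.
   Context: $\Bbbk$ is an algebraically closed field of characteristic $0$. For an integer $d\ge 1$, $A(d)=\Bbbk[x_1,x_2,x_3]/(x_1^d,x_2^d,x_3^d)=\bigoplus_j A(d)_j$ with its standard grading. $S_3$ acts on $A(d)$ by permuting variables. The linear map $E:A(d)_{j+1}\to A(d)_j$ is defined on the monomial basis by $E(x_1^{a_1}x_2^{a_2}x_3^{a_3})=\sum_{k=1}^{3} a_k(d-a_k)\,x_1^{a_1}\cdots x_k^{a_k-1}\cdots x_3^{a_3}$; it commutes with the $S_3$-action. $\operatorname{triv}(d,j)$ and $\operatorname{sign}(d,j)$ denote the multiplicities of the trivial and sign representations of $S_3$ in $\operatorname{Ker}(E)\cap A(d)_j$. *)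

(* Defs.v *)
From HB Require Import structures.
From mathcomp Require Import all_boot all_order all_algebra all_fingroup.
Set Implicit Arguments. Unset Strict Implicit. Unset Printing Implicit Defensive.
Import GRing.Theory.
Local Open Scope ring_scope.

(* Monomials x1^a1 x2^a2 x3^a3 of A(d) = k[x1,x2,x3]/(x1^d,x2^d,x3^d):
   exponent vectors a : 'I_3 -> 'I_d (0 <= a_k < d).  These form a basis of A(d). *)
Definition mon (d : nat) := {ffun 'I_3 -> 'I_d}.
Definition mdeg (d : nat) (a : mon d) : nat := (\sum_(k < 3) (a k : nat))%N.
Definition nmon (d : nat) : nat := #|{: mon d}|.

Section A.
Variable F : fieldType.
Variable d : nat.

(* Elements of A(d) are coordinate row vectors 'rV[F]_(nmon d) in the monomial
   basis (ordered by enum_val).  Linear maps act on the right: v *m M. *)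

(* coefficient of x^b in E(x^a) = sum_k a_k (d - a_k) x^(a - e_k) *)
Definition E_coef (a b : mon d) : F :=
  \sum_(k < 3) (if ((a k : nat) == (b k).+1) && [forall l, (l != k) ==> (a l == b l)]
                then ((a k : nat) * (d - a k))%N%:R else 0).

Definition Emx : 'M[F]_(nmon d) :=
  \matrix_(i, j) E_coef (enum_val i) (enum_val j).

Definition degmx (j : nat) : 'M[F]_(nmon d) :=
  \matrix_(i, i') ((i == i') && (mdeg (enum_val i) == j))%:R.

(* S_3 permutes the variables: sigma sends x_k to x_(sigma k), hence
   x^a to x^(a o sigma^-1). *)
Definition mon_act (s : 'S_3) (a : mon d) : mon d := [ffun k => a (s^-1 k)%g].

Definition permx (s : 'S_3) : 'M[F]_(nmon d) :=
  \matrix_(i, i') (enum_val i' == mon_act s (enum_val i))%:R.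

Definition KerEj (j : nat) : 'M[F]_(nmon d) :=
  (kermx Emx :&: kermx (1%:M - degmx j))%MS.

Definition triv_space (j : nat) : 'M[F]_(nmon d) :=
  (KerEj j :&: \bigcap_(s : 'S_3) kermx (permx s - 1%:M))%MS.
Definition sign_space (j : nat) : 'M[F]_(nmon d) :=
  (KerEj j :&: \bigcap_(s : 'S_3) kermx (permx s - (-1) ^+ odd_perm s *: 1%:M))%MS.

End A.

(* multiplicities of the trivial / sign representation (= dimensions of the
   corresponding isotypic components, each irreducible being 1-dimensional) *)
Definition triv (F : fieldType) (d j : nat) : nat := \rank (triv_space F d j).
Definition sign (F : fieldType) (d j : nat) : nat := \rank (sign_space F d j).

(* Main.v *)
Require Import Defs.
From HB Require Import structures.
From mathcomp Require Import all_boot all_order all_algebra all_fingroup.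
From mathcomp Require Import zify ring.
Set Implicit Arguments. Unset Strict Implicit. Unset Printing Implicit Defensive.
Import GRing.Theory.

Open Scope ring_scope.

Section Coef.
Variable F : fieldType.
Variable d : nat.
Local Notation N := (nmon d).
Local Notation mon := (mon d).

Definition vf (v : 'rV[F]_N) (a : mon) : F := v 0 (enum_rank a).

Lemma vf_inj (v w : 'rV[F]_N) : (forall a, vf v a = vf w a) -> v = w.
Proof.
move=> H; apply/rowP => i; have := H (enum_val i); by rewrite /vf enum_valK.
Qed.

Lemma vf_mul (M : mon -> mon -> F) v b :
  vf (v *m \matrix_(i, j) M (enum_val i) (enum_val j)) b = \sum_a vf v a * M a b.
Proof.
rewrite /vf mxE (reindex (@enum_rank _)) /=; last first.
  by apply: onW_bij; apply: enum_rank_bij.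
by apply: eq_bigr => a _; rewrite mxE !enum_rankK.
Qed.

Lemma vfD v w a : vf (v + w) a = vf v a + vf w a.
Proof. by rewrite /vf mxE. Qed.
Lemma vfN v a : vf (- v) a = - vf v a.
Proof. by rewrite /vf mxE. Qed.
Lemma vfB v w a : vf (v - w) a = vf v a - vf w a.
Proof. by rewrite vfD vfN. Qed.
Lemma vfZ c v a : vf (c *: v) a = c * vf v a.
Proof. by rewrite /vf mxE. Qed.
Lemma vf0 a : vf 0 a = 0.
Proof. by rewrite /vf mxE. Qed.

Lemma vf_deg v (i : nat) b : vf (v *m degmx F d i) b = (mdeg b == i)%:R * vf v b.
Proof.
rewrite /vf mxE (bigD1 (enum_rank b)) //= big1 ?addr0.
  by rewrite mxE eqxx /= enum_rankK mulrC.
by move=> k nk; rewrite mxE (negbTE nk) mulr0.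
Qed.

End Coef.

Open Scope ring_scope.

Section Ops.
Variable F : fieldType.
Variable d : nat.
Local Notation N := (nmon d).
Local Notation mon := (mon d).

Definition up (k : 'I_3) (a : mon) : mon :=
  [ffun l => if l == k then @insubd nat _ _ (a l) (a l).+1 else a l].
Definition dn (k : 'I_3) (a : mon) : mon :=
  [ffun l => if l == k then @insubd nat _ _ (a l) (a l).-1 else a l].

Lemma upE (k : 'I_3) (a : mon) l : (up k a l : nat) =
  if l == k then (if ((a l).+1 < d)%N then (a l).+1 else a l) else a l.
Proof. by rewrite ffunE; case: eqP => // _; rewrite val_insubd. Qed.

Lemma dnE (k : 'I_3) (a : mon) l : (dn k a l : nat) = if l == k then (a l).-1 else a l.
Proof.
rewrite ffunE; case: eqP => // _; rewrite val_insubd.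
by rewrite (leq_ltn_trans (leq_pred _) (ltn_ord _)).
Qed.

Lemma mon_eq (a b : mon) : (forall l, (a l : nat) = b l) -> a = b.
Proof. by move=> H; apply/ffunP => l; apply/val_inj/H. Qed.

Definition L_coef (a b : mon) : F :=
  \sum_(k < 3) (((b k : nat) == (a k).+1) && [forall l, (l != k) ==> (b l == a l)])%:R.

Definition Lmx : 'M[F]_N := \matrix_(i, j) L_coef (enum_val i) (enum_val j).

Lemma Econd (k : 'I_3) (a b : mon) :
  ((a k : nat) == (b k).+1) && [forall l, (l != k) ==> (a l == b l)]
  = ((b k).+1 < d)%N && (a == up k b).
Proof.
apply/idP/idP.
  case/andP => /eqP H1 /forallP H2.
  have lt : ((b k).+1 < d)%N by rewrite -H1 ltn_ord.
  rewrite lt; apply/eqP/mon_eq => l; rewrite upE.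
  case: eqP => [->|/eqP ne]; first by rewrite lt H1.
  by have := H2 l; rewrite ne => /eqP ->.
case/andP => lt /eqP ->; rewrite upE eqxx lt eqxx /=.
apply/forallP => l; apply/implyP => ne; apply/eqP/val_inj.
by rewrite /= upE (negbTE ne).
Qed.

Lemma Lcond (k : 'I_3) (a b : mon) :
  ((b k : nat) == (a k).+1) && [forall l, (l != k) ==> (b l == a l)]
  = (0 < b k)%N && (a == dn k b).
Proof.
apply/idP/idP.
  case/andP => /eqP H1 /forallP H2.
  rewrite H1 /=; apply/eqP/mon_eq => l; rewrite dnE.
  case: eqP => [->|/eqP ne]; first by rewrite H1.
  by have := H2 l; rewrite ne => /eqP ->.
case/andP => lt /eqP ->; rewrite dnE eqxx prednK //= eqxx /=.
apply/forallP => l; apply/implyP => ne; apply/eqP/val_inj.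
by rewrite /= dnE (negbTE ne).
Qed.

Definition wt (x : nat) : F := (x * (d - x))%:R.

Lemma vfE (v : 'rV[F]_N) b : vf (v *m Emx F d) b =
  \sum_(k < 3) (if ((b k).+1 < d)%N then vf v (up k b) * wt (b k).+1 else 0).
Proof.
rewrite /Emx vf_mul.
under eq_bigr do rewrite /E_coef mulr_sumr.
rewrite exchange_big /=; apply: eq_bigr => k _.
under eq_bigr do rewrite Econd.
case: ifP => lt.
  rewrite (bigD1 (up k b)) //= big1 ?addr0; last first.
    by move=> a /negbTE ->; rewrite mulr0.
  by rewrite eqxx upE eqxx lt.
by apply: big1 => a _; rewrite /= mulr0.
Qed.

Lemma vfL (v : 'rV[F]_N) b : vf (v *m Lmx) b =
  \sum_(k < 3) (if (0 < b k)%N then vf v (dn k b) else 0).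
Proof.
rewrite /Lmx vf_mul.
under eq_bigr do rewrite /L_coef mulr_sumr.
rewrite exchange_big /=; apply: eq_bigr => k _.
under eq_bigr do rewrite Lcond.
case: ifP => lt.
  rewrite (bigD1 (dn k b)) //= big1 ?addr0; last first.
    by move=> a /negbTE ->; rewrite mulr0.
  by rewrite eqxx mulr1.
by apply: big1 => a _; rewrite /= mulr0.
Qed.

End Ops.

Open Scope ring_scope.

Section Comm.
Variable F : fieldType.
Variable d : nat.
Local Notation N := (nmon d).
Local Notation mon := (mon d).
Local Notation wt := (wt F d).

Lemma up_same k (b : mon) : ((b k).+1 < d)%N -> (up k b k : nat) = (b k).+1.
Proof. by move=> lt; rewrite upE eqxx lt. Qed.
Lemma up_other k m (b : mon) : k != m -> (up k b m : nat) = b m.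
Proof. by move=> ne; rewrite upE eq_sym (negbTE ne). Qed.
Lemma dn_same k (b : mon) : (dn k b k : nat) = (b k).-1.
Proof. by rewrite dnE eqxx. Qed.
Lemma dn_other k m (b : mon) : k != m -> (dn k b m : nat) = b m.
Proof. by move=> ne; rewrite dnE eq_sym (negbTE ne). Qed.

Lemma dn_up k (b : mon) : ((b k).+1 < d)%N -> dn k (up k b) = b.
Proof.
move=> lt; apply: mon_eq => l; rewrite dnE upE.
by case: eqP => [->|]; rewrite ?lt.
Qed.
Lemma up_dn k (b : mon) : (0 < b k)%N -> up k (dn k b) = b.
Proof.
move=> lt; apply: mon_eq => l; rewrite upE dnE.
case: eqP => [->|_] //=; by rewrite prednK // ltn_ord.
Qed.
Lemma dn_up_comm k m (b : mon) : k != m -> dn m (up k b) = up k (dn m b).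
Proof.
move=> ne; apply: mon_eq => l; rewrite !dnE !upE !dnE.
case: (eqVneq l m) => [lm|nm]; case: (eqVneq l k) => [lk|nk]; rewrite ?lm ?lk ?eqxx //=.
by move: ne; rewrite -lm -lk eqxx.
Qed.

Lemma wt_top : wt d = 0. Proof. by rewrite /wt subnn muln0. Qed.
Lemma wt0 : wt 0 = 0. Proof. by rewrite /wt mul0n. Qed.

Lemma wt_diff (x : nat) : (x < d)%N -> wt x.+1 - wt x = (d - 1)%:R - (2 * x)%:R.
Proof.
move=> lt; apply/eqP; rewrite subr_eq addrAC eq_sym subr_eq /wt -!natrD; apply/eqP.
congr (_%:R); nia.
Qed.

Definition X' (v : 'rV[F]_N) (b : mon) k m :=
  if ((b k).+1 < d)%N && (0 < up k b m)%N then vf v (dn m (up k b)) * wt (b k).+1 else 0.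
Definition Y' (v : 'rV[F]_N) (b : mon) m k :=
  if (0 < b m)%N && ((dn m b k).+1 < d)%N then vf v (up k (dn m b)) * wt (dn m b k).+1 else 0.

Lemma vfLE v b : vf (v *m Lmx F d *m Emx F d) b = \sum_k \sum_m X' v b k m.
Proof.
rewrite vfE; apply: eq_bigr => k _; rewrite /X'.
case: ifP => lt /=; last by rewrite big1.
by rewrite vfL mulr_suml; apply: eq_bigr => m _; case: ifP => //; rewrite mul0r.
Qed.

Lemma vfEL v b : vf (v *m Emx F d *m Lmx F d) b = \sum_m \sum_k Y' v b m k.
Proof.
rewrite vfL; apply: eq_bigr => m _; rewrite /Y'.
case: ifP => lt /=; last by rewrite big1.
by rewrite vfE.
Qed.

Lemma XY_off v b k m : k != m -> X' v b k m = Y' v b m k.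
Proof.
move=> ne; rewrite /X' /Y' up_other // dn_other 1?eq_sym // dn_up_comm //.
by rewrite andbC.
Qed.

Lemma XY_diag v b k : X' v b k k - Y' v b k k = ((d - 1)%:R - (2 * b k)%:R) * vf v b.
Proof.
have -> : X' v b k k = vf v b * wt (b k).+1.
  rewrite /X'; case: ifP => [/andP[lt _]|]; first by rewrite dn_up.
  case: (ltnP (b k).+1 d) => [lt|ge]; first by rewrite up_same.
  have -> : (b k).+1 = d by apply/eqP; rewrite eqn_leq ge ltn_ord.
  by rewrite wt_top mulr0.
have -> : Y' v b k k = vf v b * wt (b k).
  rewrite /Y' dn_same; case: (posnP (b k)) => [->|lt]; first by rewrite wt0 mulr0.
  by rewrite /= prednK // ltn_ord /= up_dn.
by rewrite -mulrBr wt_diff ?ltn_ord // mulrC.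
Qed.

Lemma comm_vf v b :
  vf (v *m Lmx F d *m Emx F d) b - vf (v *m Emx F d *m Lmx F d) b
  = ((3 * (d - 1))%:R - (2 * mdeg b)%:R) * vf v b.
Proof.
rewrite vfLE vfEL [X in _ - X]exchange_big -sumrB /=.
rewrite (eq_bigr (fun k => ((d - 1)%:R - (2 * b k)%:R) * vf v b)); last first.
  move=> k _; rewrite -sumrB (bigD1 k) //= big1 ?addr0; first exact: XY_diag.
  by move=> m ne; rewrite XY_off 1?eq_sym // subrr.
rewrite /mdeg !big_ord_recl !big_ord0 /=.
rewrite !mulnDr !natrD !natrM; ring.
Qed.

End Comm.

Open Scope ring_scope.

Section Deg.
Variable F : fieldType.
Variable d : nat.
Local Notation N := (nmon d).
Local Notation mon := (mon d).

Definition Dsp (i : nat) : 'M[F]_N := kermx (1%:M - degmx F d i).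

Lemma vf_eq0 (v : 'rV[F]_N) : (forall b, vf v b = 0) -> v = 0.
Proof. by move=> H; apply: vf_inj => b; rewrite H vf0. Qed.

Lemma inDP (v : 'rV[F]_N) i :
  reflect (forall b, mdeg b != i -> vf v b = 0) (v <= Dsp i)%MS.
Proof.
rewrite /Dsp sub_kermx; apply: (iffP eqP) => [H b nb|H].
  have := f_equal (fun w => vf w b) H.
  by rewrite mulmxBr mulmx1 vfB vf_deg vf0 (negbTE nb) mul0r subr0.
apply: vf_eq0 => b; rewrite mulmxBr mulmx1 vfB vf_deg.
by case: eqP => [_|/eqP nb]; rewrite ?mul1r ?subrr // H // mul0r subr0.
Qed.

Lemma mdeg_up k (b : mon) : ((b k).+1 < d)%N -> mdeg (up k b) = (mdeg b).+1.
Proof.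
move=> lt; rewrite /mdeg (bigD1 k) //= [in RHS](bigD1 k) //= up_same //.
rewrite addSn; congr (_.+1); congr (_ + _)%N.
by apply: eq_bigr => l nl; rewrite up_other // eq_sym.
Qed.

Lemma mdeg_dn k (b : mon) : (0 < b k)%N -> mdeg (dn k b) = (mdeg b).-1.
Proof.
move=> lt; rewrite /mdeg (bigD1 k) //= [in RHS](bigD1 k) //= dn_same.
rewrite (eq_bigr (fun l => (b l : nat))); first by rewrite -subn1 addnBAC // subn1.
by move=> l nl; rewrite dn_other // eq_sym.
Qed.

Lemma DE (v : 'rV[F]_N) i : (v <= Dsp i.+1)%MS -> (v *m Emx F d <= Dsp i)%MS.
Proof.
move/inDP => H; apply/inDP => b nb; rewrite vfE big1 // => k _.
case: ifP => // lt; rewrite H ?mul0r // mdeg_up //.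
Qed.

Lemma DE0 (v : 'rV[F]_N) : (v <= Dsp 0)%MS -> v *m Emx F d = 0.
Proof.
move/inDP => H; apply: vf_eq0 => b; rewrite vfE big1 // => k _.
case: ifP => // lt; rewrite H ?mul0r // mdeg_up //.
Qed.

Lemma DL (v : 'rV[F]_N) i : (v <= Dsp i)%MS -> (v *m Lmx F d <= Dsp i.+1)%MS.
Proof.
move/inDP => H; apply/inDP => b nb; rewrite vfL big1 // => k _.
case: ifP => // lt; rewrite H // mdeg_dn //.
apply: contra nb => /eqP <-; rewrite prednK //.
by rewrite /mdeg (bigD1 k) //= (leq_trans lt) // leq_addr.
Qed.

Lemma comm_D (v : 'rV[F]_N) i : (v <= Dsp i)%MS ->
  v *m Lmx F d *m Emx F d - v *m Emx F d *m Lmx F d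
  = ((3 * (d - 1))%:R - (2 * i)%:R) *: v.
Proof.
move/inDP => H; apply: vf_inj => b; rewrite vfB comm_vf vfZ.
by case: (eqVneq (mdeg b) i) => [->|nb] //; rewrite H // !mulr0.
Qed.

Lemma mon_actE (s : 'S_3) (a : mon) k : mon_act s a k = a ((s^-1)%g k).
Proof. by rewrite ffunE. Qed.

Lemma mon_actK (s : 'S_3) (a : mon) : mon_act (s^-1)%g (mon_act s a) = a.
Proof. by apply/ffunP => k; rewrite !mon_actE invgK permK. Qed.
Lemma mon_actKV (s : 'S_3) (a : mon) : mon_act s (mon_act (s^-1)%g a) = a.
Proof. by apply/ffunP => k; rewrite !mon_actE invgK permKV. Qed.

Lemma vfP (v : 'rV[F]_N) (s : 'S_3) b : vf (v *m permx F d s) b = vf v (mon_act (s^-1)%g b).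
Proof.
rewrite /permx (vf_mul (fun a b => (b == mon_act s a)%:R)) (bigD1 (mon_act (s^-1)%g b)) //= mon_actKV eqxx mulr1.
rewrite big1 ?addr0 // => a na; case: eqP => [eb|]; last by rewrite mulr0.
by move: na; rewrite eb mon_actK eqxx.
Qed.

Lemma act_up (s : 'S_3) k (b : mon) :
  mon_act (s^-1)%g (up (s k) b) = up k (mon_act (s^-1)%g b).
Proof.
apply: mon_eq => l; rewrite mon_actE invgK !upE mon_actE invgK.
by rewrite (inj_eq perm_inj).
Qed.

Lemma act_dn (s : 'S_3) k (b : mon) :
  mon_act (s^-1)%g (dn (s k) b) = dn k (mon_act (s^-1)%g b).
Proof.
apply: mon_eq => l; rewrite mon_actE invgK !dnE mon_actE invgK.
by rewrite (inj_eq perm_inj).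
Qed.

Lemma PE (v : 'rV[F]_N) (s : 'S_3) :
  v *m permx F d s *m Emx F d = v *m Emx F d *m permx F d s.
Proof.
apply: vf_inj => b; rewrite vfP !vfE (reindex_inj (@perm_inj _ s)) /=.
apply: eq_bigr => k _; rewrite vfP act_up !mon_actE invgK.
by [].
Qed.

Lemma PL (v : 'rV[F]_N) (s : 'S_3) :
  v *m permx F d s *m Lmx F d = v *m Lmx F d *m permx F d s.
Proof.
apply: vf_inj => b; rewrite vfP !vfL (reindex_inj (@perm_inj _ s)) /=.
apply: eq_bigr => k _; rewrite vfP act_dn !mon_actE invgK.
by [].
Qed.

End Deg.

Open Scope ring_scope.

Section Core.
Variable F : fieldType.
Hypothesis char0 : forall n : nat, (n%:R == 0 :> F) = (n == 0)%N.
Variable d : nat.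
Local Notation N := (nmon d).
Local Notation mon := (mon d).
Local Notation E := (Emx F d).
Local Notation L := (Lmx F d).
Local Notation D := (Dsp F d).

Definition cn (t : nat) := (3 * (d - 1) - 2 * t)%N.

Lemma comm_Dn (v : 'rV[F]_N) t : (2 * t <= 3 * (d - 1))%N -> (v <= D t)%MS ->
  v *m E *m L = v *m L *m E - (cn t)%:R *: v.
Proof.
move=> le vD; rewrite /cn natrB // -comm_D //.
by rewrite opprB addrC subrK.
Qed.

Lemma core (r : 'rV[F]_N) i : (2 * i < 3 * (d - 1))%N -> (r <= D i)%MS ->
  r *m L *m E = 0 -> r = 0.
Proof.
move=> lti rD rLE.
pose u m := iter m (fun w => w *m E) r.
pose sm m := (\sum_(t < m.+1) cn (i - t))%N.
have F1 : forall m, (m <= i)%N -> (u m <= D (i - m))%MS.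
  elim=> [|m IH] lem; first by rewrite subn0.
  have := IH (ltnW lem); rewrite -(subnSK lem) => H.
  exact: DE.
have F2 : forall m, (m <= i)%N -> u m.+1 *m L = - (sm m)%:R *: u m.
  elim=> [|m IH] lem.
    rewrite /= (comm_Dn (ltnW lti) rD) rLE sub0r /sm big_ord1 subn0 scaleNr //.
  have um1 : (u m.+1 <= D (i - m.+1))%MS by apply: F1.
  have le2 : (2 * (i - m.+1) <= 3 * (d - 1))%N.
    by apply: leq_trans (ltnW lti); rewrite leq_mul2l leq_subr orbT.
  rewrite [u m.+2]/= (comm_Dn le2 um1).
  rewrite IH ?(ltnW lem) // -scalemxAl -/(u m.+1) -scalerBl; congr (_ *: _).
  rewrite /sm (big_ord_recr m.+1) /= natrD; ring.
have sm0 : forall m, (sm m)%:R != 0 :> F.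
  move=> m; rewrite char0 /sm big_ord_recl /= subn0 /cn -lt0n.
  by rewrite addn_gt0 subn_gt0 lti.
apply/eqP; apply: contraT => r0.
have F3 : forall m, (m <= i.+1)%N -> u m != 0.
  elim=> [|m IH] lem //.
  apply: contraNneq (IH (ltnW lem)) => um.
  have := F2 m lem; rewrite um mul0mx => /esym/eqP.
  by rewrite scaler_eq0 oppr_eq0 (negbTE (sm0 m)).
have := F3 i.+1 (leqnn _); rewrite [u i.+1]/= DE0 ?eqxx //.
by have := F1 i (leqnn _); rewrite subnn.
Qed.

Variable T : 'M[F]_N.
Hypothesis TE : forall v : 'rV[F]_N, (v <= T)%MS -> (v *m E <= T)%MS.
Hypothesis TL : forall v : 'rV[F]_N, (v <= T)%MS -> (v *m L <= T)%MS.

Lemma rank_main i : (2 * i < 3 * (d - 1))%N ->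
  (\rank ((kermx E :&: D i.+1) :&: T) + \rank (D i :&: T))%N = \rank (D i.+1 :&: T).
Proof.
move=> lti.
set W := (D i.+1 :&: T)%MS; set U := (D i :&: T)%MS.
have <- : (W :&: kermx E)%MS = (kermx E :&: D i.+1 :&: T)%MS.
  by rewrite capmxC capmxA.
rewrite -(mxrank_mul_ker W E) addnC; congr (_ + _)%N.
have WEU : (W *m E <= U)%MS.
  apply/row_subP => k; rewrite row_mul.
  have : (row k W <= W)%MS by apply: row_sub.
  rewrite !sub_capmx => /andP[H1 H2].
  by rewrite DE // TE.
have ULW : (U *m L <= W)%MS.
  apply/row_subP => k; rewrite row_mul.
  have : (row k U <= U)%MS by apply: row_sub.
  rewrite !sub_capmx => /andP[H1 H2].
  by rewrite DL // TL.
have ULEU : (U *m (L *m E) <= U)%MS.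
  by rewrite mulmxA; apply: submx_trans (submxMr E ULW) WEU.
have Z0 : (U :&: kermx (L *m E))%MS = 0.
  apply/row_matrixP => k; rewrite row0.
  have : (row k (U :&: kermx (L *m E)) <= U :&: kermx (L *m E))%MS by apply: row_sub.
  rewrite !sub_capmx sub_kermx => /andP[/andP[H1 _] /eqP H3].
  by apply: (core lti H1); rewrite -mulmxA.
have rU : \rank (U *m (L *m E)) = \rank U.
  by rewrite -(mxrank_mul_ker U (L *m E)) Z0 mxrank0 addn0.
have UWE : (U <= W *m E)%MS.
  have : (U <= U *m (L *m E))%MS by rewrite -(mxrank_leqif_sup ULEU).2 rU.
  move/submx_trans; apply; rewrite mulmxA; exact: submxMr.
by apply/eqmx_rank; rewrite WEU UWE.
Qed.

End Core.

Open Scope ring_scope.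

Section Iso.
Variable F : fieldType.
Variable d : nat.
Local Notation N := (nmon d).
Local Notation mon := (mon d).
Local Notation E := (Emx F d).
Local Notation L := (Lmx F d).
Local Notation D := (Dsp F d).

Definition Tchi (chi : 'S_3 -> F) : 'M[F]_N :=
  (\bigcap_(s : 'S_3) kermx (permx F d s - chi s *: 1%:M))%MS.

Lemma inTP chi (v : 'rV[F]_N) :
  (v <= Tchi chi)%MS <-> (forall s, v *m permx F d s = chi s *: v).
Proof.
split=> [/sub_bigcapmxP H s | H].
  by have := H s isT; rewrite sub_kermx mulmxBr scalemx1 mul_mx_scalar subr_eq0 => /eqP.
apply/sub_bigcapmxP => s _.
by rewrite sub_kermx mulmxBr scalemx1 mul_mx_scalar subr_eq0 H.
Qed.

Lemma TchiE chi (v : 'rV[F]_N) : (v <= Tchi chi)%MS -> (v *m E <= Tchi chi)%MS.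
Proof.
move/inTP => H; apply/inTP => s.
by rewrite -PE H scalemxAl.
Qed.

Lemma TchiL chi (v : 'rV[F]_N) : (v <= Tchi chi)%MS -> (v *m L <= Tchi chi)%MS.
Proof.
move/inTP => H; apply/inTP => s.
by rewrite -PL H scalemxAl.
Qed.

Lemma inT_vf chi (v : 'rV[F]_N) : (v <= Tchi chi)%MS ->
  forall s b, vf v (mon_act (s^-1)%g b) = chi s * vf v b.
Proof.
by move/inTP => H s b; rewrite -vfP H vfZ.
Qed.

Lemma mdeg_act (s : 'S_3) (a : mon) : mdeg (mon_act s a) = mdeg a.
Proof.
rewrite /mdeg [RHS](reindex_inj (@perm_inj _ (s^-1)%g)) /=.
by apply: eq_bigr => k _; rewrite mon_actE.
Qed.

Lemma act_comp (s t : 'S_3) (a : mon) : mon_act t (mon_act s a) = mon_act (s * t)%g a.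
Proof. by apply/ffunP => k; rewrite !mon_actE invMg permM. Qed.

Definition Orb (chi : 'S_3 -> F) (a : mon) : 'rV[F]_N :=
  \row_i (\sum_(s | mon_act s a == enum_val i) chi s).

Lemma vfOrb chi a b : vf (Orb chi a) b = \sum_(s | mon_act s a == b) chi s.
Proof. by rewrite /vf mxE enum_rankK. Qed.

Lemma Orb_D chi a : (Orb chi a <= D (mdeg a))%MS.
Proof.
apply/inDP => b nb; rewrite vfOrb big1 // => s /eqP e.
by move: nb; rewrite -e mdeg_act eqxx.
Qed.

Variable chi : 'S_3 -> F.
Hypothesis chiM : forall s t, chi (s * t)%g = chi s * chi t.
Hypothesis chiV : forall s, chi (s^-1)%g = chi s.

Lemma Orb_T a : (Orb chi a <= Tchi chi)%MS.
Proof.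
apply/inTP => t; apply: vf_inj => b; rewrite vfP vfZ !vfOrb.
rewrite (reindex_inj (mulIg (t^-1)%g)) /= mulr_sumr.
apply: eq_big => s.
  rewrite -(inj_eq (can_inj (@mon_actK _ t))) mon_actKV act_comp.
  by rewrite -mulgA mulVg mulg1.
by move=> _; rewrite chiM chiV mulrC.
Qed.

Variable j : nat.
Variable S : {set mon}.
Hypothesis Sdeg : forall a, a \in S -> mdeg a = j.
Hypothesis H1 : forall b, mdeg b = j ->
  (exists s, mon_act s b \in S) \/ (exists s, mon_act s b = b /\ chi s != 1).
Hypothesis H2 : forall a s, a \in S -> mon_act s a \in S -> mon_act s a = a.
Hypothesis H3 : forall a, a \in S -> \sum_(s | mon_act s a == a) chi s != 0.

Lemma rank_count : \rank (D j :&: Tchi chi)%MS = #|S|.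
Proof.
set W := (D j :&: Tchi chi)%MS.
pose sel (k : 'I_#|S|) : mon := enum_val k.
pose Pi : 'M[F]_(N, #|S|) := \matrix_(i, k) (enum_val i == sel k)%:R.
have vPi : forall (v : 'rV[F]_N) k, (v *m Pi) 0 k = vf v (sel k).
  move=> v k; rewrite mxE (bigD1 (enum_rank (sel k))) //= big1 ?addr0.
    by rewrite mxE enum_rankK eqxx mulr1.
  move=> i ni; rewrite mxE; case: eqP => [e|]; last by rewrite mulr0.
  by move: ni; rewrite -e enum_valK eqxx.
have Z0 : (W :&: kermx Pi)%MS = 0.
  apply/row_matrixP => k; rewrite row0.
  set x := row k _.
  have : (x <= W :&: kermx Pi)%MS by apply: row_sub.
  rewrite !sub_capmx sub_kermx => /andP[/andP[xD xT] /eqP xPi].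
  have xS : forall a, a \in S -> vf x a = 0.
    move=> a Ha; rewrite -(enum_rankK_in Ha Ha) -vPi xPi mxE //.
  apply: vf_eq0 => b.
  case: (eqVneq (mdeg b) j) => [eb|nb]; last by move/inDP: xD; apply.
  case: (H1 eb) => [[s Hs]|[s [fx ns]]].
    by rewrite -(mon_actK s b) (inT_vf xT) xS // mulr0.
  have := inT_vf xT s b.
  have -> : mon_act (s^-1)%g b = b by rewrite -{1}fx mon_actK.
  move/eqP; rewrite -subr_eq0 -{1}(mul1r (vf x b)) -mulrBl mulf_eq0 subr_eq0.
  by rewrite eq_sym (negbTE ns) /= => /eqP.
have full : (1%:M <= W *m Pi)%MS.
  apply/row_subP => k; rewrite row1.
  set a := sel k.
  have Ha : a \in S by apply: enum_valP.
  set sg := \sum_(s | mon_act s a == a) chi s.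
  have OPi : Orb chi a *m Pi = sg *: delta_mx 0 k.
    apply/rowP => k'; rewrite vPi vfOrb !mxE eqxx /=.
    case: (eqVneq k' k) => [->|nk]; first by rewrite mulr1.
    rewrite mulr0 big1 // => s /eqP e.
    have Hk' : sel k' \in S by apply: enum_valP.
    have e2 : mon_act s a = a by apply: H2 => //; rewrite e.
    by move: nk; rewrite -(inj_eq enum_val_inj) -/(sel k') -/(sel k) -e e2 eqxx.
  have -> : delta_mx 0 k = sg^-1 *: (Orb chi a *m Pi).
    by rewrite OPi scalerA mulVf ?scale1r // H3.
  apply: scalemx_sub; apply: submxMr.
  by rewrite sub_capmx -{1}(Sdeg Ha) Orb_D Orb_T.
rewrite -(mxrank_mul_ker W Pi) Z0 mxrank0 addn0.
apply/eqP; rewrite eqn_leq rank_leq_col /=.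
by rewrite -{1}(mxrank1 F #|S|) mxrankS.
Qed.

End Iso.

Close Scope ring_scope.

Definition i0 : 'I_3 := Ordinal (isT : (0 < 3)%N).
Definition i1 : 'I_3 := Ordinal (isT : (1 < 3)%N).
Definition i2 : 'I_3 := Ordinal (isT : (2 < 3)%N).

Lemma ord3 (k : 'I_3) : k = i0 \/ k = i1 \/ k = i2.
Proof.
case: k => [[|[|[|?]]] Hk]; [left|right;left|right;right|by []]; exact: val_inj.
Qed.

Section Sort.
Variable d : nat.
Local Notation mon := (mon d).

Definition sortedm (a : mon) := (a i0 <= a i1) && (a i1 <= a i2).
Definition strictm (a : mon) := (a i0 < a i1) && (a i1 < a i2).

Lemma mdeg3 (a : mon) : mdeg a = a i0 + a i1 + a i2.
Proof.
rewrite /mdeg !big_ord_recl big_ord0 addn0 addnA.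
by congr (_ + _ + _); congr (nat_of_ord (a _)); apply: val_inj.
Qed.

Ltac solve_sort :=
  first [ exists 1%g; rewrite !perm1; lia
        | exists (tperm i1 i2); rewrite !permE /=; lia
        | exists (tperm i0 i1); rewrite !permE /=; lia
        | exists (tperm i0 i2); rewrite !permE /=; lia
        | exists (tperm i1 i2 * tperm i0 i1)%g; rewrite !permM !permE /=; lia
        | exists (tperm i0 i1 * tperm i1 i2)%g; rewrite !permM !permE /=; lia ].

Lemma sort_ex (b : mon) : exists s : 'S_3, sortedm (mon_act s b).
Proof.
suff [t Ht] : exists t : 'S_3, (b (t i0) <= b (t i1)) && (b (t i1) <= b (t i2)).
  by exists (t^-1)%g; rewrite /sortedm !mon_actE invgK.
case: (leqP (b i0) (b i1)) => h01; case: (leqP (b i1) (b i2)) => h12;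
  case: (leqP (b i0) (b i2)) => h02; solve_sort.
Qed.

End Sort.

Section Sort2.
Variable d : nat.
Local Notation mon := (mon d).

Lemma act_tperm_fix (a : mon) p q : a p = a q -> mon_act (tperm p q) a = a.
Proof.
move=> e; apply/ffunP => k; rewrite mon_actE tpermV permE /=.
case: eqP => [->|_]; first by rewrite e.
by case: eqP => [->|_].
Qed.

Lemma sorted_min (a : mon) k : sortedm a -> a i0 <= a k.
Proof. by case/andP => h1 h2; case: (ord3 k) => [->|[->|->]] //; lia. Qed.
Lemma sorted_max (a : mon) k : sortedm a -> a k <= a i2.
Proof. by case/andP => h1 h2; case: (ord3 k) => [->|[->|->]] //; lia. Qed.

Lemma msorted_uniq (a : mon) s : sortedm a -> sortedm (mon_act s a) -> mon_act s a = a.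
Proof.
move=> sa ssa.
have e0 : mon_act s a i0 = a i0 :> nat.
  have := sorted_min (s i0) ssa; rewrite (mon_actE s a (s i0)) permK => h1.
  have h2 : a i0 <= mon_act s a i0 by rewrite mon_actE sorted_min.
  lia.
have e2 : mon_act s a i2 = a i2 :> nat.
  have := sorted_max (s i2) ssa; rewrite (mon_actE s a (s i2)) permK => h1.
  have h2 : mon_act s a i2 <= a i2 by rewrite mon_actE sorted_max.
  lia.
have e1 : mon_act s a i1 = a i1 :> nat.
  have := mdeg_act s a; rewrite !mdeg3; lia.
by apply: mon_eq => k; case: (ord3 k) => [->|[->|->]].
Qed.

Lemma strict_sorted (a : mon) : strictm a -> sortedm a.
Proof. by case/andP => h1 h2; rewrite /sortedm ltnW // ltnW. Qed.

Lemma strict_inj (a : mon) k l : strictm a -> a k = a l :> nat -> k = l.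
Proof.
case/andP => h1 h2.
by case: (ord3 k) => [->|[->|->]]; case: (ord3 l) => [->|[->|->]] //; lia.
Qed.

Lemma strict_stab (a : mon) s : strictm a -> mon_act s a = a -> s = 1%g.
Proof.
move=> sa e.
have H : (s^-1)%g = 1%g.
  apply/permP => k; rewrite perm1; apply: (strict_inj sa).
  by rewrite -mon_actE e.
by rewrite -(invgK s) H invg1.
Qed.

End Sort2.

Open Scope ring_scope.

Section Final.
Variable F : fieldType.
Hypothesis char0 : forall n : nat, (n%:R == 0 :> F) = (n == 0)%N.
Variable d : nat.
Local Notation mon := (mon d).

Definition S1 j := [set a : mon | sortedm a && (mdeg a == j)].
Definition S2 j := [set a : mon | strictm a && (mdeg a == j)].

Definition chi1 : 'S_3 -> F := fun _ => 1.
Definition chi2 : 'S_3 -> F := fun s => (-1) ^+ odd_perm s.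

Lemma act1 (a : mon) : mon_act 1%g a = a.
Proof. by apply/ffunP => k; rewrite mon_actE invg1 perm1. Qed.

Lemma rank_S1 j : \rank (Dsp F d j :&: Tchi d chi1)%MS = #|S1 j|.
Proof.
apply: rank_count.
- by move=> s t; rewrite /chi1 mulr1.
- by [].
- by move=> a; rewrite inE => /andP[_ /eqP].
- move=> b eb; left; have [s Hs] := sort_ex b; exists s.
  by rewrite inE Hs mdeg_act eb eqxx.
- move=> a s; rewrite !inE => /andP[sa _] /andP[ssa _]; exact: msorted_uniq.
- move=> a _; rewrite /chi1.
  have -> : \sum_(s | mon_act s a == a) (1 : F) = (\sum_(s | mon_act s a == a) 1%N)%:R.
    by rewrite natr_sum.
  by rewrite char0 (bigD1 1%g) ?act1 //=.
Qed.

Lemma chi2M s t : chi2 (s * t)%g = chi2 s * chi2 t.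
Proof. by rewrite /chi2 odd_permM signr_addb. Qed.
Lemma chi2V s : chi2 (s^-1)%g = chi2 s.
Proof. by rewrite /chi2 odd_permV. Qed.

Lemma rank_S2 j : \rank (Dsp F d j :&: Tchi d chi2)%MS = #|S2 j|.
Proof.
apply: rank_count.
- exact: chi2M.
- exact: chi2V.
- by move=> a; rewrite inE => /andP[_ /eqP].
- move=> b eb; have [s Hs] := sort_ex b.
  case St: (strictm (mon_act s b)).
    by left; exists s; rewrite inE St mdeg_act eb eqxx.
  right.
  have [p [q [pq e]]] : exists p q, p != q /\ mon_act s b p = mon_act s b q.
    case: (eqVneq (mon_act s b i0 : nat) (mon_act s b i1)) => e01.
      by exists i0, i1; split => //; apply: val_inj.
    exists i1, i2; split => //; apply: val_inj.
    move: e01 Hs; move/negbT: St; rewrite /sortedm /strictm /=; lia.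
  exists (s * tperm p q * s^-1)%g; split.
    by rewrite -!act_comp act_tperm_fix // mon_actK.
  rewrite !chi2M chi2V mulrAC -expr2 /chi2 sqrr_sign mul1r odd_tperm pq /=.
  by rewrite -subr_eq0 -opprD oppr_eq0 -mulr2n char0.
- move=> a s; rewrite !inE => /andP[sa _] /andP[ssa _].
  by apply: msorted_uniq; apply: strict_sorted.
- move=> a; rewrite inE => /andP[sa _].
  rewrite (eq_bigl (pred1 1%g)) ?big_pred1_eq.
    by rewrite /chi2 odd_perm1 expr0 oner_neq0.
  move=> s /=; apply/idP/eqP => [/eqP|->]; last by rewrite act1.
  exact: strict_stab.
Qed.

Lemma triv_spaceE j :
  triv_space F d j = ((kermx (Emx F d) :&: Dsp F d j) :&: Tchi d chi1)%MS.
Proof.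
rewrite /triv_space /KerEj /Tchi /chi1; congr (_ :&: _)%MS.
by apply: eq_bigr => s _; rewrite scale1r.
Qed.

Lemma sign_spaceE j :
  sign_space F d j = ((kermx (Emx F d) :&: Dsp F d j) :&: Tchi d chi2)%MS.
Proof. by []. Qed.

Lemma triv_eq i : (2 * i < 3 * (d - 1))%N -> (triv F d i.+1 + #|S1 i| = #|S1 i.+1|)%N.
Proof.
move=> lti; rewrite /triv triv_spaceE -rank_S1 -rank_S1.
apply: rank_main => //; [exact: TchiE | exact: TchiL].
Qed.

Lemma sign_eq i : (2 * i < 3 * (d - 1))%N -> (sign F d i.+1 + #|S2 i| = #|S2 i.+1|)%N.
Proof.
move=> lti; rewrite /sign sign_spaceE -rank_S2 -rank_S2.
apply: rank_main => //; [exact: TchiE | exact: TchiL].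
Qed.

End Final.

Close Scope ring_scope.

Lemma card_int d (P : pred nat) lo hi : hi < d -> (forall b, P b = (lo <= b <= hi)) ->
  #|[set b : 'I_d | P b]| = hi.+1 - lo.
Proof.
move=> hd HP; rewrite -sum1dep_card -(big_mkord (fun b => P b) (fun _ => 1)).
case: (leqP lo hi.+1) => lh; last first.
  rewrite big1; first lia.
  by move=> b; rewrite HP; lia.
rewrite (big_cat_nat (leq0n lo) (leq_trans lh hd)) /=.
rewrite (big_cat_nat lh hd) /=.
rewrite [X in X + _]big_nat_cond [X in X + _]big1; last first.
  by move=> b /andP[/andP[_ hb]]; rewrite HP; lia.
rewrite [X in _ + (_ + X)]big_nat_cond [X in _ + (_ + X)]big1; last first.
  by move=> b /andP[/andP[hb _]]; rewrite HP; lia.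
rewrite big_nat_cond (eq_bigl (fun b => (lo <= b < hi.+1) && true)); last first.
  by move=> b; rewrite HP; lia.
by rewrite -big_nat_cond sum_nat_const_nat muln1 add0n addn0.
Qed.

Lemma card_split (T : finType) (A : {set T}) (p : pred T) :
  #|A| = #|[set a in A | p a]| + #|[set a in A | ~~ p a]|.
Proof.
rewrite -(cardsID [set a | p a] A); congr (_ + _); apply: eq_card => a; by rewrite !inE // andbC.
Qed.

Section Count.
Variable d : nat.
Local Notation mon := (mon d).

Definition mk3 (x y z : 'I_d) : mon := [ffun k => if k == i0 then x else if k == i1 then y else z].
Lemma mk3_0 x y z : mk3 x y z i0 = x. Proof. by rewrite ffunE. Qed.
Lemma mk3_1 x y z : mk3 x y z i1 = y. Proof. by rewrite ffunE. Qed.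
Lemma mk3_2 x y z : mk3 x y z i2 = z. Proof. by rewrite ffunE. Qed.

Lemma i20 : i2 != i0. Proof. by []. Qed.
Lemma i21 : i2 != i1. Proof. by []. Qed.

Lemma up2 (a : mon) : (a i2).+1 < d ->
  [/\ up i2 a i0 = a i0 :> nat, up i2 a i1 = a i1 :> nat & up i2 a i2 = (a i2).+1 :> nat].
Proof. by move=> h; rewrite (@up_other _ i2 i0) // (@up_other _ i2 i1) // up_same. Qed.
Lemma dn2 (a : mon) :
  [/\ dn i2 a i0 = a i0 :> nat, dn i2 a i1 = a i1 :> nat & dn i2 a i2 = (a i2).-1 :> nat].
Proof. by rewrite (@dn_other _ i2 i0) // (@dn_other _ i2 i1) // dn_same. Qed.

Lemma shift_card (P : mon -> bool) (Q : mon -> bool) (i : nat) :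
  (forall a : mon, (a i2).+1 < d -> P a -> P (up i2 a) && Q (up i2 a)) ->
  (forall a : mon, P a -> Q a -> 0 < a i2 /\ P (dn i2 a)) ->
  #|[set a in [set a | P a && (mdeg a == i)] | ~~ ((a i2).+1 == d)]|
  = #|[set a in [set a | P a && (mdeg a == i.+1)] | Q a]|.
Proof.
move=> HPQ HQP.
set Y := [set a in _ | _].
have -> : [set a in [set a | P a && (mdeg a == i.+1)] | Q a] = up i2 @: Y.
  apply/setP => a; rewrite !inE; apply/idP/imsetP.
    case/andP => /andP[Pa /eqP da] Qa.
    have [pos Pd] := HQP a Pa Qa.
    exists (dn i2 a); last by rewrite up_dn.
    rewrite !inE Pd mdeg_dn // da /= eqxx /=.
    by rewrite dn_same prednK // neq_ltn ltn_ord.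
  case=> b; rewrite !inE => /andP[/andP[Pb /eqP db] nb] ->.
  have lt : (b i2).+1 < d by rewrite ltn_neqAle nb ltn_ord.
  have /andP[Pu Qu] := HPQ b lt Pb.
  by rewrite Pu Qu mdeg_up // db eqxx.
rewrite card_in_imset // => a b; rewrite !inE => /andP[_ na] /andP[_ nb] e.
have la : (a i2).+1 < d by rewrite ltn_neqAle na ltn_ord.
have lb : (b i2).+1 < d by rewrite ltn_neqAle nb ltn_ord.
by rewrite -(dn_up la) e dn_up.
Qed.

Lemma card_mid (X : {set mon}) (P : pred nat) :
  {in X &, forall a b : mon, a i1 = b i1 :> nat -> a = b} ->
  (forall a : mon, a \in X -> P (a i1)) ->
  (forall n : 'I_d, P n -> exists2 a, a \in X & a i1 = n :> nat) ->
  #|X| = #|[set n : 'I_d | P n]|.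
Proof.
move=> inj HP HX.
rewrite -(card_in_imset (f := fun a : mon => a i1)); last first.
  by move=> a b Ha Hb e; apply: inj => //; rewrite e.
apply: eq_card => n; rewrite [in RHS]inE; apply/imsetP/idP.
  by case=> a Ha ->; apply: HP.
by move/HX => [a Ha e]; exists a => //; apply: val_inj.
Qed.

Lemma mon_eq3 (a b : mon) : a i0 = b i0 :> nat -> a i1 = b i1 :> nat -> a i2 = b i2 :> nat -> a = b.
Proof. by move=> h0 h1 h2; apply: mon_eq => k; case: (ord3 k) => [->|[->|->]]. Qed.

End Count.

Close Scope ring_scope.

Section Final2.
Variable d : nat.
Local Notation mon := (mon d).

Lemma S1_shift i :
  #|S1 d i.+1| + #|[set a in S1 d i | (a i2).+1 == d]|
  = #|S1 d i| + #|[set a in S1 d i.+1 | (a i1 : nat) == a i2]|.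
Proof.
have h1 : forall a : mon, (a i2).+1 < d -> sortedm a ->
    sortedm (up i2 a) && ((up i2 a i1 : nat) != up i2 a i2).
  move=> a lt; case: (up2 lt) => e0 e1 e2; rewrite /sortedm e0 e1 e2; lia.
have h2 : forall a : mon, sortedm a -> (a i1 : nat) != a i2 -> 0 < a i2 /\ sortedm (dn i2 a).
  move=> a; case: (dn2 a) => e0 e1 e2; rewrite /sortedm e0 e1 e2 => *; split; lia.
have H := @shift_card d (@sortedm d) (fun a => (a i1 : nat) != a i2) i h1 h2.
rewrite (card_split (S1 d i.+1) (fun a => (a i1 : nat) == a i2)).
rewrite (card_split (S1 d i) (fun a => (a i2).+1 == d)).
rewrite /S1 in H *; by rewrite H addnAC [RHS]addnC addnA.
Qed.

Lemma S2_shift i :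
  #|S2 d i.+1| + #|[set a in S2 d i | (a i2).+1 == d]|
  = #|S2 d i| + #|[set a in S2 d i.+1 | (a i2 : nat) == (a i1).+1]|.
Proof.
have h1 : forall a : mon, (a i2).+1 < d -> strictm a ->
    strictm (up i2 a) && ((up i2 a i2 : nat) != (up i2 a i1).+1).
  move=> a lt; case: (up2 lt) => e0 e1 e2; rewrite /strictm e0 e1 e2; lia.
have h2 : forall a : mon, strictm a -> (a i2 : nat) != (a i1).+1 -> 0 < a i2 /\ strictm (dn i2 a).
  move=> a; case: (dn2 a) => e0 e1 e2; rewrite /strictm e0 e1 e2 => *; split; lia.
have H := @shift_card d (@strictm d) (fun a => (a i2 : nat) != (a i1).+1) i h1 h2.
rewrite (card_split (S2 d i.+1) (fun a => (a i2 : nat) == (a i1).+1)).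
rewrite (card_split (S2 d i) (fun a => (a i2).+1 == d)).
rewrite /S2 in H *; by rewrite H addnAC [RHS]addnC addnA.
Qed.

End Final2.

Section Final3.
Variable d : nat.
Local Notation mon := (mon d).

Ltac norm a :=
  let x0 := fresh "x" in let x1 := fresh "x" in let x2 := fresh "x" in
  set x0 := nat_of_ord (a i0); set x1 := nat_of_ord (a i1);
  set x2 := nat_of_ord (a i2).

Lemma X11 (j : nat) : #|[set a in S1 d j | (a i1 : nat) == a i2]|
  = #|[set n : 'I_d | (j <= 3 * n) && (2 * n <= j)]|.
Proof.
apply: (@card_mid d _ (fun n => (j <= 3 * n) && (2 * n <= j))).
- move=> a b; rewrite !inE /sortedm !mdeg3 => /andP[/andP[sa da] ea] /andP[/andP[sb db] eb] e.
  apply: mon_eq3; move: sa da ea sb db eb e; norm a; norm b; lia.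
- by move=> a; rewrite !inE /sortedm !mdeg3; norm a; lia.
- move=> n /andP[h1 h2].
  have h : j - 2 * n < d by have := ltn_ord n; lia.
  exists (mk3 (Ordinal h) n n); last by rewrite mk3_1.
  by rewrite !inE /sortedm mdeg3 mk3_0 mk3_1 mk3_2 /=; lia.
Qed.

Lemma X21 (i : nat) : d.-1 <= i -> #|[set a in S1 d i | (a i2).+1 == d]|
  = #|[set n : 'I_d | (i - d.-1 <= 2 * n) && (n <= i - d.-1)]|.
Proof.
move=> hi; apply: (@card_mid d _ (fun n => (i - d.-1 <= 2 * n) && (n <= i - d.-1))).
- move=> a b; rewrite !inE /sortedm !mdeg3 => /andP[/andP[sa da] ea] /andP[/andP[sb db] eb] e.
  apply: mon_eq3; move: sa da ea sb db eb e; norm a; norm b; lia.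
- by move=> a; rewrite !inE /sortedm !mdeg3; norm a; lia.
- move=> n /andP[h1 h2].
  have h : i - d.-1 - n < d by have := ltn_ord n; lia.
  have h' : d.-1 < d by have := ltn_ord n; lia.
  exists (mk3 (Ordinal h) n (Ordinal h')); last by rewrite mk3_1.
  by rewrite !inE /sortedm mdeg3 mk3_0 mk3_1 mk3_2 /=; have := ltn_ord n; lia.
Qed.

Lemma X12 (j : nat) : #|[set a in S2 d j | (a i2 : nat) == (a i1).+1]|
  = #|[set n : 'I_d | [&& 2 * n < j, j < 3 * n + 1 & n.+1 < d]]|.
Proof.
apply: (@card_mid d _ (fun n => [&& 2 * n < j, j < 3 * n + 1 & n.+1 < d])).
- move=> a b; rewrite !inE /strictm !mdeg3 => /andP[/andP[sa da] ea] /andP[/andP[sb db] eb] e.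
  apply: mon_eq3; move: sa da ea sb db eb e; norm a; norm b; lia.
- by move=> a; rewrite !inE /strictm !mdeg3; have := ltn_ord (a i2); norm a; lia.
- move=> n /and3P[h1 h2 h3].
  have h : j - 1 - 2 * n < d by have := ltn_ord n; lia.
  exists (mk3 (Ordinal h) n (Ordinal h3)); last by rewrite mk3_1.
  by rewrite !inE /strictm mdeg3 mk3_0 mk3_1 mk3_2 /=; lia.
Qed.

Lemma X22 (i : nat) : d.-1 <= i -> #|[set a in S2 d i | (a i2).+1 == d]|
  = #|[set n : 'I_d | [&& i - d.-1 < 2 * n, n <= i - d.-1 & n < d.-1]]|.
Proof.
move=> hi; apply: (@card_mid d _ (fun n => [&& i - d.-1 < 2 * n, n <= i - d.-1 & n < d.-1])).
- move=> a b; rewrite !inE /strictm !mdeg3 => /andP[/andP[sa da] ea] /andP[/andP[sb db] eb] e.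
  apply: mon_eq3; move: sa da ea sb db eb e; norm a; norm b; lia.
- by move=> a; rewrite !inE /strictm !mdeg3; norm a; lia.
- move=> n /and3P[h1 h2 h3].
  have h : i - d.-1 - n < d by have := ltn_ord n; lia.
  have h' : d.-1 < d by have := ltn_ord n; lia.
  exists (mk3 (Ordinal h) n (Ordinal h')); last by rewrite mk3_1.
  by rewrite !inE /strictm mdeg3 mk3_0 mk3_1 mk3_2 /=; lia.
Qed.

End Final3.

Close Scope ring_scope.

Theorem theorem5p2 (F : closedFieldType) (charF0 : [pchar F]%R =i pred0)
  (d j : nat) (hd : 3 <= d) (hdj : d <= j) (hj : j <= (3 * (d - 1)) %/ 2) :
  (odd d -> ~~ odd (j - d) ->
     triv F d j = (3 * d - 2 * j - 3) %/ 6 /\ sign F d j = (3 * d - 2 * j - 3) %/ 6 + 1)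
  /\ (odd d -> odd (j - d) ->
     triv F d j = (3 * d - 2 * j - 3) %/ 6 + 1 /\ sign F d j = (3 * d - 2 * j - 3) %/ 6)
  /\ (~~ odd d ->
     triv F d j = (3 * d - 2 * j) %/ 6 /\ sign F d j = (3 * d - 2 * j) %/ 6).
Proof.
have char0 := (GRing.pcharf0P F).1 charF0.
have [i ji] : exists i, j = i.+1 by exists j.-1; rewrite prednK //; lia.
subst j.
have lti : 2 * i < 3 * (d - 1) by lia.
have hi : d.-1 <= i by lia.
have et := triv_eq char0 lti.
have es := sign_eq char0 lti.
have e1 := S1_shift d i.
have e2 := S2_shift d i.
have c11 : #|[set a in S1 d i.+1 | (a i1 : nat) == a i2]| = (i.+1 %/ 2).+1 - (i.+1 + 2) %/ 3.
  rewrite X11; apply: (card_int (P := fun n => (i.+1 <= 3 * n) && (2 * n <= i.+1))); first lia.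
  by move=> b; apply/idP/idP; lia.
have c21 : #|[set a in S1 d i | (a i2).+1 == d]| = (i - d.-1).+1 - (i - d.-1 + 1) %/ 2.
  rewrite X21 //; apply: (card_int (P := fun n => (i - d.-1 <= 2 * n) && (n <= i - d.-1))); first lia.
  by move=> b; apply/idP/idP; lia.
have c12 : #|[set a in S2 d i.+1 | (a i2 : nat) == (a i1).+1]| = (i %/ 2).+1 - (i.+1 + 2) %/ 3.
  rewrite X12; apply: (card_int (P := fun n => [&& 2 * n < i.+1, i.+1 < 3 * n + 1 & n.+1 < d])); first lia.
  by move=> b; apply/idP/idP; lia.
have c22 : #|[set a in S2 d i | (a i2).+1 == d]| = (i - d.-1).+1 - ((i - d.-1) %/ 2).+1.
  rewrite X22 //; apply: (card_int (P := fun n => [&& i - d.-1 < 2 * n, n <= i - d.-1 & n < d.-1])); first lia.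
  by move=> b; apply/idP/idP; lia.
rewrite c11 c21 in e1; rewrite c12 c22 in e2.
move: et es e1 e2.
set t := triv _ _ _; set s := sign _ _ _.
set A := #|S1 d i|; set B := #|S1 d i.+1|; set C := #|S2 d i|; set D := #|S2 d i.+1|.
move=> et es e1 e2.
split; [|split] => *; split; lia.
Qed.
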